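(* Let $u$ be an endomorphism of a vector space $V$ of countably infinite dimension over a field $\mathbb{F}$. Assume that $u$ has no dominant eigenvalue and that $(u-\lambda\,\mathrm{id}_V)^2=0$ for some $\lambda\in\mathbb{F}$. Then $V^u$ has a good stratification.
   Context: A scalar $\mu$ is a dominant eigenvalue of $u$ if $\operatorname{rk}(u-\mu\,\mathrm{id}_V)<\dim V$. $V^u$ is the $\mathbb{F}[t]$-module with underlying space $V$ and $t\cdot x:=u(x)$. A stratification of a non-zero $\mathbb{F}[t]$-module $M$ is an increasing family $(M_\alpha)_{\alpha\in D}$ of submodules indexed by a well-ordered set $D$ such that each quotient $M_\alpha/\sum_{\beta<\alpha}M_\beta$ is non-zero and monogenous (cyclic), and $M=\sum_{\alpha\in D}M_\alpha$; its dimension sequence is $n_\alpha:=\dim_{\mathbb{F}}(M_\alpha/\sum_{\beta<\alpha}M_\beta)\in\mathbb{N}^*\cup\{+\infty\}$. It is good if (a) $n_\alpha\ge 2$ whenever $\alpha$ is the minimum of $D$ or the successor of some element of $D$, and (b) $D$ has no maximum. *)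

(* Defs.v *)
From HB Require Import structures.
From mathcomp Require Import all_boot all_order all_algebra.
Set Implicit Arguments. Unset Strict Implicit. Unset Printing Implicit Defensive.
Import GRing.Theory.
Local Open Scope ring_scope.

Section Defs.
Variables (F : fieldType) (V : lmodType F).

Definition subspace (W : V -> Prop) : Prop :=
  [/\ W 0, (forall x y, W x -> W y -> W (x + y)) & (forall (a : F) x, W x -> W (a *: x))].

Definition span (S : V -> Prop) : V -> Prop :=
  fun v => forall W, subspace W -> (forall x, S x -> W x) -> W v.

Definition lin_indep (e : nat -> V) : Prop :=
  forall (n : nat) (c : nat -> F),
    \sum_(i < n) c i *: e i = 0 -> forall i, (i < n)%N -> c i = 0.

Definition countably_infinite_dim : Prop :=
  exists e : nat -> V, lin_indep e /\ forall v, span (fun x => exists i, x = e i) v.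

Variable u : V -> V.

Definition shift (mu : F) (x : V) : V := u x - mu *: x.

(** mu is a dominant eigenvalue: rk(u - mu id) < dim V = aleph_0, i.e. the
    image of u - mu id is finite-dimensional (contained in the span of a
    finite list of vectors). *)
Definition dominant_eigenvalue (mu : F) : Prop :=
  exists s : seq V, forall x, span (fun y => y \in s) (shift mu x).

(** Submodules of V^u: u-stable subspaces. *)
Definition submodule (W : V -> Prop) : Prop :=
  subspace W /\ (forall x, W x -> W (u x)).

Definition gen_submodule (S : V -> Prop) : V -> Prop :=
  fun v => forall W, submodule W -> (forall x, S x -> W x) -> W v.

Definition well_order (D : Type) (lt : D -> D -> Prop) : Prop :=
  [/\ (forall a, ~ lt a a),
      (forall a b c, lt a b -> lt b c -> lt a c),
      (forall a b, a = b \/ lt a b \/ lt b a)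
    & well_founded lt].

Section Strat.
Variables (D : Type) (lt : D -> D -> Prop) (M : D -> V -> Prop).

Definition below_sum (a : D) : V -> Prop :=
  span (fun x => exists b, lt b a /\ M b x).

Definition stratification : Prop :=
  [/\ well_order lt,
      (forall a, submodule (M a)),
      (forall a b, lt a b -> forall x, M a x -> M b x),
      ((* each quotient M_a / sum_{b<a} M_b is non-zero ... *)
      (forall a, exists x, M a x /\ ~ below_sum a x)) /\
      (* ... and monogenous: M_a = F[t] x + sum_{b<a} M_b *)
      (forall a, exists x, M a x /\
         forall v, M a v <-> gen_submodule (fun y => y = x \/ below_sum a y) v)
    &
      (forall v, span (fun x => exists a, M a x) v)].

(** n_a >= 2: the quotient M_a / sum_{b<a} M_b contains two linearly
    independent vectors. *)
Definition quot_dim_ge2 (a : D) : Prop :=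
  exists x y, [/\ M a x, M a y &
    forall c d : F, below_sum a (c *: x + d *: y) -> c = 0 /\ d = 0].

Definition is_minimum (a : D) : Prop := forall b, ~ lt b a.
Definition is_successor (a : D) : Prop :=
  exists b, lt b a /\ forall c, ~ (lt b c /\ lt c a).

Definition good_stratification : Prop :=
  [/\ stratification,
      (forall a, is_minimum a \/ is_successor a -> quot_dim_ge2 a)
    & (forall a, exists b, lt a b)].
End Strat.

Definition has_good_stratification : Prop :=
  exists (D : Type) (lt : D -> D -> Prop) (M : D -> V -> Prop),
    good_stratification lt M.

End Defs.

(* Main.v *)
Require Import Defs.
From HB Require Import structures.
From mathcomp Require Import all_boot all_order all_algebra.
From Stdlib Require Import ClassicalEpsilon Classical Cantor Inverse_Image.
Import GRing.Theory.
Set Implicit Arguments. Unset Strict Implicit. Unset Printing Implicit Defensive.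
Local Open Scope ring_scope.

Section Basics.
Variables (F : fieldType) (V : lmodType F) (u : {linear V -> V}) (lam : F).

Lemma span_subspace (S : V -> Prop) : subspace (Defs.span S).
Proof.
split.
- by move=> W [W0 _ _] _.
- move=> x y Hx Hy W HW HS; case: (HW) => _ HD _; apply: HD; [exact: Hx | exact: Hy].
- move=> c x Hx W HW HS; case: (HW) => _ _ HZ; apply: HZ; exact: Hx.
Qed.

Lemma span_in (S : V -> Prop) x : S x -> Defs.span S x.
Proof. by move=> Sx W _ HS; apply: HS. Qed.

Lemma gen_sub (S : V -> Prop) : submodule u (gen_submodule u S).
Proof.
split; first split.
- by move=> W [[W0 _ _] _] _.
- move=> x y Hx Hy W HW HS; case: (HW) => [[_ HD _] _]; apply: HD; [exact: Hx | exact: Hy].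
- move=> c x Hx W HW HS; case: (HW) => [[_ _ HZ] _]; apply: HZ; exact: Hx.
- move=> x Hx W HW HS; case: (HW) => _ HU; apply: HU; exact: Hx.
Qed.

Lemma gen_in (S : V -> Prop) x : S x -> gen_submodule u S x.
Proof. by move=> Sx W _ HS; apply: HS. Qed.

Local Notation a := (shift u lam).

Lemma aD x y : a (x + y) = a x + a y.
Proof. rewrite /shift linearD scalerDr opprD; by rewrite addrACA. Qed.

Lemma aZ (c : F) x : a (c *: x) = c *: a x.
Proof. by rewrite /shift linearZ scalerBr !scalerA mulrC. Qed.

Lemma a0 : a 0 = 0.
Proof. by rewrite /shift linear0 scaler0 subr0. Qed.

Lemma aN x : a (- x) = - a x.
Proof. by rewrite -scaleN1r aZ scaleN1r. Qed.

Lemma subN (W : V -> Prop) x : subspace W -> W x -> W (- x).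
Proof. by move=> [_ _ HZ] Hx; rewrite -scaleN1r; apply: HZ. Qed.

Lemma sub_a (W : V -> Prop) x : submodule u W -> W x -> W (a x).
Proof.
case=> -[W0 HD HZ] HU Hx; rewrite /shift; apply: (HD); first exact: HU.
by apply: (subN (And3 W0 HD HZ)); apply: HZ.
Qed.

Lemma sub_of_a (W : V -> Prop) : subspace W -> (forall x, W x -> W (a x)) -> submodule u W.
Proof.
move=> [W0 HD HZ] Ha; split; first by split.
move=> x Hx; have -> : u x = a x + lam *: x by rewrite /shift subrK.
by apply: HD; [apply: Ha | apply: HZ].
Qed.

End Basics.

From mathcomp Require Import zify.

Definition lexlt (p q : nat * nat) := (p.1 < q.1)%N \/ (p.1 = q.1 /\ (p.2 < q.2)%N).
Definition ltD (x y : nat) := lexlt (of_nat x) (of_nat y).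

Lemma lex_wf : well_founded lexlt.
Proof.
move=> [k m].
elim/(well_founded_induction Wf_nat.lt_wf): k m => k IHk m.
elim/(well_founded_induction Wf_nat.lt_wf): m => m IHm.
constructor => -[k' m'] [/= H|[/= -> H]]; [apply: IHk | apply: IHm]; apply/ltP; exact: H.
Qed.

Lemma ltD_wo : well_order ltD.
Proof.
split.
- by move=> x; rewrite /ltD /lexlt; lia.
- by move=> x y z; rewrite /ltD /lexlt; lia.
- move=> x y; rewrite /ltD /lexlt.
  case Ex: (of_nat x) => [x1 x2]; case Ey: (of_nat y) => [y1 y2] /=.
  have [[E1 E2]|H] : (x1 = y1 /\ x2 = y2) \/
     ((x1 < y1)%N \/ x1 = y1 /\ (x2 < y2)%N) \/ (y1 < x1)%N \/ y1 = x1 /\ (y2 < x2)%N by lia.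
    by left; rewrite -(cancel_to_of x) -(cancel_to_of y) Ex Ey E1 E2.
  by right.
- exact: (wf_inverse_image _ _ lexlt of_nat lex_wf).
Qed.

Definition islim n := exists k, of_nat n = (k.+1, 0%N).

Lemma notlim_of al : is_minimum ltD al \/ is_successor ltD al -> ~ islim al.
Proof.
move=> H [k Ek]; case: H => [Hm|[b [Hb Hn]]].
  apply: (Hm (to_nat (0%N, 0%N))); rewrite /ltD /lexlt cancel_of_to Ek /=; left; lia.
move: Hb; rewrite /ltD /lexlt Ek /=; case Eb: (of_nat b) => [j m] /= Hb.
apply: (Hn (to_nat (j, m.+1))); rewrite /ltD /lexlt cancel_of_to Eb Ek /=; lia.
Qed.

Section Constr.
Variables (F : fieldType) (V : lmodType F) (u : {linear V -> V}) (lam : F) (e : nat -> V).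
Hypothesis a2 : forall x, shift u lam (shift u lam x) = 0.
Hypothesis nodom : ~ dominant_eigenvalue u lam.
Local Notation a := (shift u lam).

Lemma aDl x y : a (x + y) = a x + a y. Proof. exact: aD. Qed.
Lemma aZl (c : F) x : a (c *: x) = c *: a x. Proof. exact: aZ. Qed.
Lemma a0l : a 0 = 0. Proof. exact: a0. Qed.
Lemma aNl x : a (- x) = - a x. Proof. exact: aN. Qed.

Definition WI (W : V -> Prop) y := exists w q, W w /\ y = w + a q.
Definition Good2 (W : V -> Prop) y :=
  forall c d : F, W (c *: y + d *: a y) -> c = 0 /\ d = 0.
Definition WnextP (P : Prop) (W : V -> Prop) y v :=
  exists w (c d : F), W w /\ (P \/ (c = 0 /\ d = 0)) /\ v = w + c *: y + d *: a y.
Definition Spec n (W : V -> Prop) y :=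
  (Good2 W y \/ (islim n /\ a y = 0 /\ ~ WI W y)) /\
  (forall k, of_nat n = (k.+1, 0%N) -> WnextP True W y (e k)).
Definition pick n W : V := epsilon (inhabits 0) (Spec n W).
Fixpoint st n : V -> Prop :=
  match n with 0%N => fun v => v = 0 | m.+1 => WnextP True (st m) (pick m (st m)) end.
Definition g n := pick n (st n).

Lemma sum6 (x1 x2 x3 y1 y2 y3 : V) :
  x1 + x2 + x3 + (y1 + y2 + y3) = x1 + y1 + (x2 + y2) + (x3 + y3).
Proof. rewrite addrACA; congr (_ + _); exact: addrACA. Qed.

Lemma WnextP_sub P W y : submodule u W -> submodule u (WnextP P W y).
Proof.
move=> HW; have [[W0 HD HZ] HU] := HW.
apply: (@sub_of_a F V u lam); first split.
- exists 0, 0, 0; split; first exact: W0.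
  by split; [right | rewrite !scale0r !addr0].
- move=> _ _ [w [c [d [Hw [HP ->]]]]] [w' [c' [d' [Hw' [HP' ->]]]]].
  exists (w + w'), (c + c'), (d + d'); split; first by apply: HD.
  split; last by rewrite !scalerDl sum6.
  case: HP => [p|[-> ->]]; first by left.
  case: HP' => [p|[-> ->]]; first by left.
  by right; rewrite addr0.
- move=> k _ [w [c [d [Hw [HP ->]]]]].
  exists (k *: w), (k * c), (k * d); split; first by apply: HZ.
  split; last by rewrite !scalerDr !scalerA.
  by case: HP => [p|[-> ->]]; [left | right; rewrite !mulr0].
- move=> _ [w [c [d [Hw [HP ->]]]]].
  exists (a w), 0, c; split; first exact: (sub_a lam).
  split; last by rewrite !aDl !aZl a2 scaler0 addr0 scale0r addr0.
  by case: HP => [p|[c0 _]]; [left | right].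
Qed.

Lemma zero_sub : submodule u (fun v : V => v = 0).
Proof.
apply: (@sub_of_a F V u lam); first split.
- by [].
- by move=> x y -> ->; rewrite addr0.
- by move=> c x ->; rewrite scaler0.
- by move=> x ->; rewrite a0l.
Qed.

Lemma st_sub n : submodule u (st n).
Proof. elim: n => [|n IH] /=; [exact: zero_sub | exact: WnextP_sub]. Qed.

Lemma st_fin n : exists s : seq V, forall v, st n v -> Defs.span (fun y => y \in s) v.
Proof.
elim: n => [|n [s Hs]] /=.
  by exists [::] => v ->; case: (span_subspace (fun y : V => y \in [::])).
exists [:: g n, a (g n) & s] => _ [w [c [d [Hw [_ ->]]]]].
have [S0 SD SZ] := span_subspace (fun y : V => y \in [:: g n, a (g n) & s]).
apply: (SD); [apply: (SD)|]; last 2 first.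
- by apply: (SZ); apply: span_in; rewrite !inE eqxx /= ?orbT.
- by apply: (SZ); apply: span_in; rewrite !inE eqxx /= ?orbT.
move=> W HW HS; apply: (Hs w Hw W HW) => x Hx; apply: HS; by rewrite !inE Hx !orbT.
Qed.

Lemma good2_of (W : V -> Prop) x : submodule u W -> ~ W (a x) -> Good2 W x.
Proof.
move=> HW Hn c d Hw.
have [[W0 HD HZ] HU] := HW.
have Hac : W (c *: a x).
  by have := sub_a lam HW Hw; rewrite aDl !aZl a2 scaler0 addr0.
have c0 : c = 0.
  case: (eqVneq c 0) => // cn0; exfalso; apply: Hn.
  by have := HZ c^-1 _ Hac; rewrite scalerA mulVf // scale1r.
subst c; split => //; rewrite scale0r add0r in Hw.
case: (eqVneq d 0) => // dn0; exfalso; apply: Hn.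
by have := HZ d^-1 _ Hw; rewrite scalerA mulVf // scale1r.
Qed.

Lemma fresh (W : V -> Prop) : submodule u W ->
  (exists s : seq V, forall v, W v -> Defs.span (fun y => y \in s) v) ->
  exists x, Good2 W x.
Proof.
move=> HW [s Hs]; apply: NNPP => H; apply: nodom; exists s => x.
apply: NNPP => Hx; apply: H; exists x; apply: good2_of => // Wax.
by apply: Hx; apply: Hs.
Qed.


Lemma st_S n v : st n.+1 v = WnextP True (st n) (g n) v.
Proof. by []. Qed.

Lemma st_WI n : (forall t, (t < n)%N -> Spec t (st t) (g t)) ->
  forall v, st n v -> (exists q, v = a q) -> exists w, st n w /\ v = a w.
Proof.
elim: n => [|n IH] Hsp v.
  by move=> /= -> _; exists 0; split => //; rewrite a0l.
rewrite st_S => -[w [c [d [Hw [_ Hv]]]]] [q Hq].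
have [[W0 HD HZ] HU] := st_sub n.
have Hav : a v = 0 by rewrite Hq a2.
have Haw : a w + c *: a (g n) = 0.
  by move: Hav; rewrite Hv !aDl !aZl a2 scaler0 addr0.
have Hca : c *: a (g n) = - a w.
  by apply/eqP; rewrite -addr_eq0 addrC Haw.
have [[HG|[_ [Hz HnWI]]] _] := Hsp n (ltnSn n).
- have Hin : st n (0 *: g n + c *: a (g n)) by rewrite scale0r add0r Hca; apply: subN; [split|apply: (sub_a lam)].
  have [_ c0] := HG 0 c Hin; subst c.
  have [w0 [Hw0 Ew]] : exists w0, st n w0 /\ w = a w0.
    apply: IH => //; first by move=> t Ht; apply: Hsp; apply: ltnW.
    exists (q - d *: g n); rewrite aDl aNl aZl -Hq Hv.
    by rewrite scale0r addr0 addrK.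
  exists (w0 + d *: g n); split.
    by exists w0, d, 0; split => //; split; [left | rewrite scale0r addr0].
  by rewrite Hv Ew scale0r addr0 aDl aZl.
- have c0 : c = 0.
    case: (eqVneq c 0) => // cn0; exfalso; apply: HnWI.
    exists (- (c^-1 *: w)), (c^-1 *: q).
    split; first by apply: subN; [split | apply: HZ].
    have : c *: g n = a q - w by rewrite -Hq Hv Hz scaler0 addr0 addrC addKr.
    move=> /(congr1 (fun x => c^-1 *: x)); rewrite scalerA mulVf // scale1r => ->.
    by rewrite scalerBr aZl addrC.
  subst c; move: Hv; rewrite Hz scaler0 scale0r !addr0 => Hv; subst w.
  have [w0 [Hw0 ->]] := IH (fun t Ht => Hsp t (ltnW Ht)) v Hw (ex_intro _ q Hq).
  exists w0; split => //; exists w0, 0, 0; split => //; split; first by left.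
  by rewrite !scale0r !addr0.
Qed.

Lemma spec_ex n : (forall t, (t < n)%N -> Spec t (st t) (g t)) ->
  exists y, Spec n (st n) y.
Proof.
move=> Hsp.
have HW := st_sub n; have [[W0 HD HZ] HU] := HW.
have [y0 Hy0] := fresh HW (st_fin n).
case En : (of_nat n) => [k m].
have notlim : ~ islim n -> exists y, Spec n (st n) y.
  move=> Hnl; exists y0; split; first by left.
  by move=> k' Ek'; exfalso; apply: Hnl; exists k'.
case: k En => [|k] En; first by apply: notlim => -[k' Ek']; rewrite En in Ek'.
case: m En => [|m] En; last by apply: notlim => -[k' Ek']; rewrite En in Ek'.
have islimn : islim n by exists k.
have Hk : forall k', of_nat n = (k'.+1, 0%N) -> k' = k by move=> k'; rewrite En => -[].
set x := e k.
have spec_of : forall y, (Good2 (st n) y \/ (a y = 0 /\ ~ WI (st n) y)) ->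
    WnextP True (st n) y x -> Spec n (st n) y.
  move=> y Hy Hx; split; first by case: Hy => [?|?]; [left | right].
  by move=> k' /Hk ->.
case: (classic (st n (a x))) => Hax; last first.
  exists x; apply: spec_of; first by left; apply: good2_of.
  by exists 0, 1, 0; split => //; split; [left | rewrite add0r scale1r scale0r addr0].
case: (classic (st n x)) => Hx.
  exists y0; apply: spec_of; first by left.
  by exists x, 0, 0; split => //; split; [left | rewrite !scale0r !addr0].
case: (classic (WI (st n) x)) => HWI.
  have [w [q [Hw Exq]]] := HWI.
  exists q; apply: spec_of.
    left; apply: good2_of => // Haq; apply: Hx; rewrite Exq; exact: HD.
  by exists w, 0, 1; split => //; split; [left | rewrite scale0r addr0 scale1r].
have [w' [Hw' Eaw]] := st_WI Hsp Hax (ex_intro _ x erefl).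
exists (x - w'); apply: spec_of.
  right; split; first by rewrite aDl aNl Eaw subrr.
  move=> [w'' [q [Hw'' Eq]]]; apply: HWI; exists (w' + w''), q; split; first exact: HD.
  by rewrite -addrA -Eq addrC subrK.
by exists w', 1, 0; split => //; split; [left | rewrite scale1r scale0r addr0 addrC subrK].
Qed.

Lemma spec_all n : Spec n (st n) (g n).
Proof.
suff H : forall n t, (t < n)%N -> Spec t (st t) (g t) by exact: (H n.+1).
clear n; elim=> [|n IH] t //; rewrite ltnS leq_eqVlt => /orP[/eqP ->|]; last exact: IH.
exact: (epsilon_spec (inhabits 0) (Spec n (st n)) (spec_ex IH)).
Qed.


Fixpoint stA (A : nat -> Prop) n : V -> Prop :=
  match n with 0%N => fun v => v = 0 | m.+1 => WnextP (A m) (stA A m) (g m) end.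

Lemma stA_sub A n : submodule u (stA A n).
Proof. elim: n => [|n IH] /=; [exact: zero_sub | exact: WnextP_sub]. Qed.

Lemma stA_le A n v : stA A n v -> st n v.
Proof.
elim: n v => [|n IH] v //= [w [c [d [Hw [_ Hv]]]]].
by exists w, c, d; split; [apply: IH | split; [left|]].
Qed.

Lemma st_step n v : st n v -> st n.+1 v.
Proof. by move=> Hv; exists v, 0, 0; split => //; split; [right | rewrite !scale0r !addr0]. Qed.

Lemma stA_step A n v : stA A n v -> stA A n.+1 v.
Proof. by move=> Hv; exists v, 0, 0; split => //; split; [right | rewrite !scale0r !addr0]. Qed.

Lemma st_mono n m v : (n <= m)%N -> st n v -> st m v.
Proof.
move=> /subnKC <-; elim: (m - n)%N => [|k IH] Hv; first by rewrite addn0.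
by rewrite addnS; apply: st_step; apply: IH.
Qed.

Lemma stA_mono A n m v : (n <= m)%N -> stA A n v -> stA A m v.
Proof.
move=> /subnKC <-; elim: (m - n)%N => [|k IH] Hv; first by rewrite addn0.
by rewrite addnS; apply: stA_step; apply: IH.
Qed.

Lemma blk m c d : st m (c *: g m + d *: a (g m)) ->
  [/\ c = 0, d *: a (g m) = 0 & (~ islim m -> d = 0)].
Proof.
move=> H; have [[HG|[Hl [Hz HnWI]]] _] := spec_all m.
  by have [-> ->] := HG c d H; rewrite scale0r.
have [[W0 HD HZ] HU] := st_sub m.
split; last by move=> /(_ Hl).
  case: (eqVneq c 0) => // cn0; exfalso; apply: HnWI.
  exists (g m), 0; split; last by rewrite a0l addr0.
  move: H; rewrite Hz scaler0 addr0 => /(HZ c^-1).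
  by rewrite scalerA mulVf // scale1r.
by rewrite Hz scaler0.
Qed.

Lemma key A al : ~ A al -> forall n v, st al.+1 v -> stA A n v -> st al v.
Proof.
move=> nA; elim=> [|m IH] v Hv1 /=.
  by move=> ->; case: (st_sub al) => -[].
move=> [w [c [d [Hw [HP Ev]]]]].
case: (ltngtP m al) => Hm.
- apply: (st_mono Hm); apply: (stA_le (A := A)).
  by exists w, c, d.
- have [[W0 HD HZ] HU] := st_sub m.
  have Hw' : st m w := stA_le Hw.
  have Hb : st m (c *: g m + d *: a (g m)).
    have -> : c *: g m + d *: a (g m) = v + (- w) by rewrite Ev [RHS]addrC !addrA addNr add0r.
    by apply: (HD); [apply: (st_mono Hm) | apply: (subN (And3 W0 HD HZ) Hw')].
  have [c0 d0 _] := blk Hb.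
  apply: IH => //; move: Hv1; rewrite Ev c0 scale0r addr0 d0 addr0 //.
- subst m; case: HP => [//|[c0 d0]].
  by move: Ev; rewrite c0 d0 !scale0r !addr0 => ->; apply: stA_le Hw.
Qed.

Definition Mg (b : nat) : V -> Prop :=
  gen_submodule u (fun y => exists c, (c = b \/ ltD c b) /\ y = g c).

Lemma Mg_g b : Mg b (g b).
Proof. by apply: gen_in; exists b; split; [left|]. Qed.

Lemma Mg_ag b : Mg b (a (g b)).
Proof. exact: (sub_a lam (gen_sub u _) (@Mg_g b)). Qed.

Lemma Mg_mono b b' x : ltD b b' -> Mg b x -> Mg b' x.
Proof.
move=> Hbb' Hx; apply: Hx; first exact: gen_sub.
move=> y [c [Hc ->]]; apply: gen_in; exists c; split => //; right.
case: Hc => [->|Hc] //; case: ltD_wo => _ Htr _ _; exact: Htr Hc Hbb'.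
Qed.

Lemma Q al c d : below_sum ltD Mg al (c *: g al + d *: a (g al)) ->
  st al (c *: g al + d *: a (g al)).
Proof.
move=> Hb.
pose A := fun b => ltD b al.
pose UA := fun v => exists n, stA A n v.
have HU : submodule u UA.
  apply: (@sub_of_a F V u lam); first split.
  - by exists 0%N.
  - move=> x y [n Hn] [m Hm]; exists (n + m)%N.
    have [[_ HD _] _] := stA_sub A (n + m).
    by apply: HD; [apply: stA_mono Hn; apply: leq_addr | apply: stA_mono Hm; apply: leq_addl].
  - move=> k x [n Hn]; exists n; case: (stA_sub A n) => -[_ _ HZ] _; exact: HZ.
  - move=> x [n Hn]; exists n; apply: (sub_a lam) Hn; exact: stA_sub.
have [n Hn] : UA (c *: g al + d *: a (g al)).
  apply: Hb; first exact: HU.1.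
  move=> x [b [Hb' Hx]]; apply: Hx; first exact: HU.
  move=> y [c' [Hc' ->]]; exists c'.+1.
  exists 0, 1, 0; split; first by case: (stA_sub A c') => -[].
  split; last by rewrite add0r scale1r scale0r addr0.
  left; rewrite /A; case: Hc' => [->|Hc'] //.
  by case: ltD_wo => _ Htr _ _; exact: Htr Hc' Hb'.
apply: (key (A := A)) Hn; first by case: ltD_wo => Hirr _ _ _; exact: Hirr.
exists 0, c, d; split; first by case: (st_sub al) => -[].
by split; [left | rewrite add0r].
Qed.

Hypothesis espan : forall v, Defs.span (fun x => exists i, x = e i) v.

Lemma st_cover m v : st m v -> Defs.span (fun x => exists b, Mg b x) v.
Proof.
have [S0 SD SZ] := span_subspace (fun x => exists b, Mg b x).
elim: m v => [|m IH] v /=; first by move=> ->.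
move=> [w [c [d [Hw [_ ->]]]]].
apply: (SD); [apply: (SD)|]; first exact: IH.
- by apply: SZ; apply: span_in; exists m; exact: Mg_g.
- by apply: SZ; apply: span_in; exists m; exact: Mg_ag.
Qed.

Lemma good_constr : has_good_stratification u.
Proof.
exists nat, ltD, Mg; split.
- split.
  + exact: ltD_wo.
  + by move=> b; exact: gen_sub.
  + by move=> b b' H x; apply: Mg_mono.
  + split.
    * move=> al; exists (g al); split; first exact: Mg_g.
      move=> Hb; have Hb1 : below_sum ltD Mg al (1 *: g al + 0 *: a (g al)) by rewrite scale1r scale0r addr0.
      have [H10 _ _] := blk (Q Hb1).
      by move: (oner_neq0 F); rewrite H10 eqxx.
    * move=> al; exists (g al); split; first exact: Mg_g.
      move=> v; split.
      - move=> Hv; apply: Hv; first exact: gen_sub.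
        move=> y [c [Hc ->]]; apply: gen_in; case: Hc => [->|Hlt]; first by left.
        right; apply: span_in; exists c; split => //; exact: Mg_g.
      - move=> Hv; apply: Hv; first exact: gen_sub.
        move=> y [->|Hy]; first exact: Mg_g.
        apply: Hy; first exact: (gen_sub u _).1.
        by move=> x [b [Hb Hx]]; apply: Mg_mono Hx.
  + move=> v; apply: (espan v); first exact: span_subspace.
    move=> x [i ->]; apply: (st_cover (m := (to_nat (i.+1, 0%N)).+1)).
    have [_ H] := spec_all (to_nat (i.+1, 0%N)); apply: H.
    exact: cancel_of_to.
- move=> al Hal; exists (g al), (a (g al)); split; [exact: Mg_g | exact: Mg_ag |].
  move=> c d /Q /blk [c0 _ d0]; split => //; apply: d0; exact: notlim_of.
- move=> x; case Ex: (of_nat x) => [k m]; exists (to_nat (k, m.+1)).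
  by rewrite /ltD /lexlt cancel_of_to Ex /=; right; split.
Qed.

End Constr.

Theorem lemma5 (F : fieldType) (V : lmodType F) (u : {linear V -> V}) :
  countably_infinite_dim V ->
  (forall mu : F, ~ dominant_eigenvalue u mu) ->
  (exists lambda : F, forall x : V, shift u lambda (shift u lambda x) = 0) ->
  has_good_stratification u.
Proof.
move=> [e [_ He]] Hnd [lam Hl].
exact: (@good_constr F V u lam e Hl (Hnd lam) He).
Qed.
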